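(* Let $\phi\in C^3((0,\infty))$, $\eta=\phi'$ and $\hat\eta(r)=\eta(r)+2\eta(2r)$, and suppose there are constants $0<a_0<\tilde r_1<\tilde r_2<2a_0$ and $a_1>a_0$ such that: $\eta'(r)>0$ for $0<r<\tilde r_1$ and $\eta'(r)<0$ for $r>\tilde r_1$; $\eta''(r)<0$ for $0<r<\tilde r_2$ and $\eta''(r)>0$ for $r>\tilde r_2$; $\hat\eta(r)<0$ for $0<r<a_0$ and $\hat\eta(r)>0$ for $r>a_0$; $\hat\eta'(r)>0$ for $0<r<a_1$ and $\hat\eta'(r)<0$ for $r>a_1$. Let $N,K$ be positive integers with $K<N-1$, and let $\hat{\mathbf\Psi}^F:(0,\infty)^{2N+1}\to\mathbb R^{2N+1}$, $\mathbf r=(r_{-N},\dots,r_N)\mapsto(\hat\psi^F_{-N}(\mathbf r),\dots,\hat\psi^F_N(\mathbf r))$, be defined by $\hat\psi^F_j(\mathbf r)=\eta(r_j)+2\eta(2r_j)$ for $-N\le j\le -K$ and for $K\le j\le N$, and $\hat\psi^F_j(\mathbf r)=\eta(r_j)+\eta(r_j+r_{j-1})+\eta(r_j+r_{j+1})+[2\eta(2r_K)-\eta(r_K+r_{K-1})-\eta(r_K+r_{K+1})]$ for $-K+1\le j\le K-1$. Let $\mathbf a_0=(a_0,\dots,a_0)\in\mathbb R^{2N+1}$. If $\eta'(a_0)+8\eta'(2a_0)>0$, then $\hat{\mathbf\Psi}^F$ is bijective in a neighborhood of $\mathbf a_0$, i.e. there is an open neighborhood $U$ of $\mathbf a_0$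 such that $\hat{\mathbf\Psi}^F$ maps $U$ bijectively onto an open neighborhood of $\hat{\mathbf\Psi}^F(\mathbf a_0)$.
   Context: This map $\hat{\mathbf\Psi}^F$ is the (symmetrized) internal conjugate force of the force-based quasicontinuum approximation of a one-dimensional atomic chain with nearest and next-nearest neighbour pair interactions given by the potential $\phi$; indices $-K+1,\dots,K-1$ form the atomistic region and the others the continuum region. *)

(* Defs.v *)
From HB Require Import structures.
From mathcomp Require Import all_boot all_order all_algebra.
From mathcomp Require Import all_classical all_reals all_analysis.
Set Implicit Arguments. Unset Strict Implicit. Unset Printing Implicit Defensive.
Import Order.TTheory GRing.Theory Num.Theory.
Import numFieldNormedType.Exports.
Local Open Scope classical_set_scope.
Local Open Scope ring_scope.

Definition C3_pos (R : realType) (phi : R -> R) : Prop :=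
  forall x : R, 0 < x ->
    [/\ derivable phi x 1, derivable (derive1 phi) x 1, derivable (derive1 (derive1 phi)) x 1
      & {for x, continuous (derive1 (derive1 (derive1 phi)))}].

Definition hat_eta (R : realType) (eta : R -> R) (r : R) : R :=
  eta r + 2 * eta (2 * r).

(* Vectors (r_{-N},...,r_N) are
   rows of length 2N+1; entry at position k : 'I_(2N+1) is r_{k-N}.
   Atomistic indices -K+1 <= j <= K-1 correspond to N-K < k < N+K. *)
Definition psiF (R : realType) (eta : R -> R) (N K : nat)
  (r : 'rV[R]_(N.*2.+1)) : 'rV[R]_(N.*2.+1) :=
  let x (k : nat) := r 0 (inord k) in
  \row_(i < N.*2.+1)
    if ((N - K < i) && (i < N + K))%N then
      eta (x i) + eta (x i + x i.-1) + eta (x i + x i.+1)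
      + (2 * eta (2 * x (N + K)%N) - eta (x (N + K)%N + x (N + K).-1)
         - eta (x (N + K)%N + x (N + K).+1))
    else eta (x i) + 2 * eta (2 * x i).

(* Main.v *)
Require Import Defs.
Set Warnings "-notation-overridden,-ambiguous-paths,-notation-incompatible-prefix".
From HB Require Import structures.
From mathcomp Require Import all_boot all_order all_algebra.
From mathcomp Require Import all_classical all_reals all_analysis.
From mathcomp Require Import ring lra.
Import Order.TTheory GRing.Theory Num.Theory.
Import numFieldNormedType.Exports.
Local Open Scope classical_set_scope.
Local Open Scope ring_scope.
HB.instance Definition _ (R : realType) (m n : nat) := Complete.on 'M[R]_(m, n).
Section RV.
Context {R : realType} {n : nat}.

Lemma rv_norm_ge (x : 'rV[R]_n) i : `|x 0 i| <= `|x|.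
Proof.
rewrite [leRHS]/Num.Def.normr /= mx_normrE; apply/bigmax_geP; right => /=.
by exists (0, i).
Qed.

Lemma rv_norm_le (x : 'rV[R]_n) c : 0 <= c -> (forall i, `|x 0 i| <= c) -> `|x| <= c.
Proof.
move=> c0 H; rewrite [leLHS]/Num.Def.normr /= mx_normrE.
apply: bigmax_le => // -[i j] _ /=; by rewrite (ord1 i).
Qed.

Lemma rv_norm_lt (x : 'rV[R]_n) c : 0 < c -> (forall i, `|x 0 i| < c) -> `|x| < c.
Proof.
move=> c0 H; rewrite [ltLHS]/Num.Def.normr /= mx_normrE.
apply: bigmax_lt => // -[i j] _ /=; by rewrite (ord1 i).
Qed.

Lemma sdd_inv (F : 'rV[R]_n -> 'rV[R]_n) (a : 'rV[R]_n) (d q cm cM : R) (c : 'I_n -> R) :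
  0 < d -> 0 <= q -> q < 1 -> 0 < cm -> 0 < cM -> (forall i, cm <= c i) -> (forall i, c i <= cM) ->
  (forall x y, `|x - a| <= d -> `|y - a| <= d -> forall i,
      `|(x 0 i - y 0 i) - c i * (F x 0 i - F y 0 i)| <= q * `|x - y|) ->
  exists U : set 'rV[R]_n, [/\ open U, U a, U `<=` [set x | `|x - a| < d],
     (forall x y, U x -> U y -> F x = F y -> x = y) & open (F @` U)].
Proof.
move=> d0 q0 q1 cm0 cM0 cmi cMi H.
have ci0 i : 0 < c i by apply: lt_le_trans (cmi i).
have Lip x y : `|x - a| <= d -> `|y - a| <= d ->
    `|F x - F y| <= (1 + q) / cm * `|x - y|.
  move=> xa ya; apply: rv_norm_le.
    by apply: mulr_ge0 => //; apply: divr_ge0 => //; lra.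
  move=> i; rewrite !mxE.
  have h1 := H x y xa ya i.
  have h2 : `|x 0 i - y 0 i| <= `|x - y|.
    by have := rv_norm_ge (x - y) i; rewrite !mxE.
  have h3 : c i * `|F x 0 i - F y 0 i| <= (1 + q) * `|x - y|.
    rewrite -[c i]ger0_norm ?(ltW (ci0 i)) // -normrM.
    have -> : c i * (F x 0 i - F y 0 i) =
      (x 0 i - y 0 i) - ((x 0 i - y 0 i) - c i * (F x 0 i - F y 0 i)) by ring.
    apply: le_trans (ler_normB _ _) _; lra.
  rewrite mulrAC ler_pdivlMr //.
  apply: le_trans h3; rewrite mulrC ler_wpM2r //.
pose eps := (1 - q) * d / (2 * cM).
have eps0 : 0 < eps.
  by rewrite /eps; apply: divr_gt0; [apply: mulr_gt0 => //; lra | lra].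
pose U := [set x | `|x - a| < d /\ `|F x - F a| < eps].
exists U; split.
- rewrite openE => x [xa fx]; rewrite /interior; apply/nbhs_ballP.
  have q1' : 0 < 1 + q by lra.
  have r0 : 0 < Num.min (d - `|x - a|) ((eps - `|F x - F a|) * cm / (1 + q)).
    rewrite lt_min; apply/andP; split; first by lra.
    by apply: divr_gt0 => //; apply: mulr_gt0 => //; lra.
  exists (Num.min (d - `|x - a|) ((eps - `|F x - F a|) * cm / (1 + q))) => //.
  move=> z; rewrite -ball_normE /= lt_min => /andP[h1 h2].
  have za : `|z - a| < d.
    by apply: le_lt_trans (ler_distD x z a) _; rewrite distrC; lra.
  split => //.
  apply: le_lt_trans (ler_distD (F x) (F z) (F a)) _.
  have := Lip z x (ltW za) (ltW xa).
  rewrite distrC [`|z - x|]distrC => h3.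
  have h4 : (1 + q) / cm * `|x - z| < eps - `|F x - F a|.
    have h5 : (1 + q) / cm * `|x - z| <
      (1 + q) / cm * ((eps - `|F x - F a|) * cm / (1 + q)).
      by rewrite ltr_pM2l // divr_gt0.
    apply: (lt_le_trans h5); rewrite le_eqVlt; apply/orP; left; apply/eqP; field.
    by apply/andP; split; apply/lt0r_neq0.
  lra.
- by rewrite /U /= !subrr normr0; split.
- by move=> x [].
- move=> x y [xa _] [ya _] Fxy.
  have h : `|x - y| <= q * `|x - y|.
    apply: rv_norm_le; first by rewrite mulr_ge0.
    move=> i; have := H x y (ltW xa) (ltW ya) i.
    by rewrite Fxy subrr mulr0 subr0 !mxE.
  have h0 : `|x - y| <= 0.
    have : (1 - q) * `|x - y| <= 0 by rewrite mulrBl mul1r subr_le0.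
    by rewrite pmulr_rle0 // subr_gt0.
  apply/eqP; rewrite -subr_eq0 -normr_eq0; apply/eqP/le_anti.
  by rewrite h0 normr_ge0.
- suff -> : F @` U = ball (F a) eps by apply: ball_open.
  apply/seteqP; split.
    move=> _ [x [_ fx] <-]; rewrite -ball_normE /=; by rewrite distrC.
  move=> y; rewrite -ball_normE /= => ya.
  pose G := fun x => x - \row_i (c i * (F x 0 i - y 0 i)).
  pose B := closed_ball_ Num.Def.normr a (d / 2).
  have Bd x : B x -> `|x - a| <= d.
    rewrite /B /closed_ball_ /= distrC => h; apply: le_trans h _; lra.
  have Bd' x : B x -> `|x - a| <= d / 2.
    by rewrite /B /closed_ball_ /= distrC.
  have Ba : B a by rewrite /B /closed_ball_ /= subrr normr0; lra.
  have GB : {homo G : x / B x >-> B x}.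
    move=> x Bx; rewrite /B /closed_ball_ /= distrC.
    apply: rv_norm_le; first by lra.
    move=> i; rewrite !mxE.
    have h1 := H x a (Bd _ Bx) (Bd _ Ba) i.
    have xa2 : `|x - a| <= d / 2 by move: Bx; rewrite /B /closed_ball_ /= distrC.
    have h2 : `|F a 0 i - y 0 i| <= `|F a - y|.
      by have := rv_norm_ge (F a - y) i; rewrite !mxE.
    have h3 : c i * `|F a 0 i - y 0 i| <= cM * eps.
      by apply: ler_pM => //; [exact: ltW | lra].
    have h4 : cM * eps = (1 - q) * d / 2.
      by rewrite /eps; field; apply/lt0r_neq0.
    have h5 : q * `|x - a| <= q * (d / 2) by apply: ler_wpM2l.
    have -> : x 0 i - c i * (F x 0 i - y 0 i) - a 0 i =
      (x 0 i - a 0 i - c i * (F x 0 i - F a 0 i)) - c i * (F a 0 i - y 0 i) by ring.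
    apply: le_trans (ler_normB _ _) _.
    rewrite normrM (ger0_norm (ltW (ci0 i))).
    lra.
  have [g gE] := Pfun GB.
  have ctr : is_contraction g.
    exists (NngNum q0); split => //=.
    move=> [u v] [/= Bu Bv]; rewrite -!gE.
    apply: rv_norm_le; first by rewrite mulr_ge0.
    move=> i; rewrite !mxE.
    have := H u v (Bd _ Bu) (Bd _ Bv) i.
    by have -> : u 0 i - c i * (F u 0 i - y 0 i) - (v 0 i - c i * (F v 0 i - y 0 i)) =
      u 0 i - v 0 i - c i * (F u 0 i - F v 0 i) by ring.
  have [p Bp pE] := @banach_fixed_point R [the completeNormedModType R of 'rV[R]_n] B g ctr (@closed_closed_ball_ _ _ a (d/2)) (ex_intro _ a Ba).
  have Fp : F p = y.
    apply/matrixP => i j; rewrite (ord1 i).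
    have := congr1 (fun M : 'rV[R]_n => M 0 j) pE; rewrite -gE /G !mxE.
    move=> /eqP; rewrite -subr_eq0 opprB addrC subrK mulf_eq0 => /orP[|].
      by rewrite gt_eqF.
    by rewrite subr_eq0 => /eqP.
  exists p => //; split.
    have := Bd' _ Bp; lra.
  by rewrite Fp distrC.
Qed.
End RV.
Lemma slope (R : realType) (eta : R -> R) (c : R) : 0 < c ->
  (forall t, 0 < t -> derivable eta t 1) -> {for c, continuous (derive1 eta)} ->
  forall k, 0 < k -> exists r, [/\ 0 < r, r < c &
   (forall u v, `|u - c| <= r -> `|v - c| <= r ->
      `|eta u - eta v - derive1 eta c * (u - v)| <= k * `|u - v|)].
Proof.
move=> c0 der cont k k0.
have /cvgrPdist_lt /(_ k k0) /nbhs_ballP [r /= r0 hr] := cont.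
have rc0 : 0 < Num.min (r / 2) (c / 2) by rewrite lt_min; apply/andP; split; lra.
exists (Num.min (r / 2) (c / 2)); split => //.
  by rewrite gt_min; apply/orP; right; lra.
have key u v : u <= v -> `|u - c| <= Num.min (r / 2) (c / 2) ->
    `|v - c| <= Num.min (r / 2) (c / 2) ->
    `|eta u - eta v - derive1 eta c * (u - v)| <= k * `|u - v|.
  move=> uv; rewrite !le_min => /andP[u1 u2] /andP[v1 v2].
  move: u1 => /[!ler_norml] /andP[u1 u1']; move: u2 => /[!ler_norml] /andP[u2 u2'].
  move: v1 => /[!ler_norml] /andP[v1 v1']; move: v2 => /[!ler_norml] /andP[v2 v2'].
  have pos t : t \in `[u, v] -> 0 < t.
    rewrite in_itv /= => /andP[ut tv]. lra.
  have [xi xiin xiE] : exists2 xi, xi \in `[u, v] & eta v - eta u = derive1 eta xi * (v - u).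
    apply: MVT_segment => //.
      move=> x xin; rewrite derive1E; apply: derivableP; apply: der; apply: pos.
      by move: xin; rewrite !in_itv /= => /andP[? ?]; apply/andP; split; apply: ltW.
    by apply: derivable_within_continuous => x xin; apply: der; apply: pos.
  have xic : `|c - xi| < r.
    move: xiin; rewrite in_itv /= => /andP[h1 h2].
    rewrite ltr_norml; apply/andP; split; lra.
  have := hr xi xic => /= hxi.
  have -> : eta u - eta v - derive1 eta c * (u - v) = (derive1 eta c - derive1 eta xi) * (v - u).
    have -> : eta u - eta v = - (eta v - eta u) by ring.
    rewrite xiE; ring.
rewrite -ler_norml normrM [`|v - u|]distrC; apply: ler_wpM2r => //; exact: ltW.
move=> u v hu hv.
have [uv|vu] := leP u v; first exact: key.
have := key v u (ltW vu) hv hu.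
have -> : eta v - eta u - derive1 eta c * (v - u) = - (eta u - eta v - derive1 eta c * (u - v)) by ring.
by rewrite normrN [`|v - u|]distrC => h.
Qed.
Section Rows.
Context {R : realType}.

Lemma sl_use (f : R -> R) e k D u v : 0 <= k -> `|u - v| <= D ->
  `|f u - f v - e * (u - v)| <= k * `|u - v| ->
  - (k * D) <= f u - f v - e * (u - v) <= k * D.
Proof.
move=> k0 uv h; rewrite -ler_norml; apply: le_trans h _; exact: ler_wpM2l.
Qed.

Lemma neg_prod (e d D : R) : e <= 0 -> `|d| <= D -> e * D <= e * d <= - (e * D).
Proof.
move=> e0 dD; move: (dD); rewrite ler_norml => /andP[h1 h2].
apply/andP; split; first by rewrite ler_wnM2l.
by rewrite -mulrN ler_wnM2l.
Qed.

Lemma pair_le (a b c d D : R) : `|a - b| <= D -> `|c - d| <= D -> `|(a + c) - (b + d)| <= D + D.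
Proof.
move=> h1 h2; have -> : a + c - (b + d) = (a - b) + (c - d) by ring.
by apply: le_trans (ler_normD _ _) _; apply: lerD.
Qed.

Lemma dbl_le (a b D : R) : `|a - b| <= D -> `|2 * a - 2 * b| <= D + D.
Proof.
move=> h; have -> : 2 * a - 2 * b = (a + a) - (b + b) by ring.
exact: pair_le.
Qed.

Lemma atom_est (f : R -> R) (e1 e2 k D xi yi xm ym xp yp xR yR xRm yRm xRp yRp : R) :
  e2 <= 0 -> 0 <= k -> 0 < e1 + 2 * e2 ->
  `|xi - yi| <= D -> `|xm - ym| <= D -> `|xp - yp| <= D -> `|xR - yR| <= D ->
  `|xRm - yRm| <= D -> `|xRp - yRp| <= D ->
  `|f xi - f yi - e1 * (xi - yi)| <= k * `|xi - yi| ->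
  `|f (xi + xm) - f (yi + ym) - e2 * ((xi + xm) - (yi + ym))| <= k * `|(xi + xm) - (yi + ym)| ->
  `|f (xi + xp) - f (yi + yp) - e2 * ((xi + xp) - (yi + yp))| <= k * `|(xi + xp) - (yi + yp)| ->
  `|f (2 * xR) - f (2 * yR) - e2 * (2 * xR - 2 * yR)| <= k * `|2 * xR - 2 * yR| ->
  `|f (xR + xRm) - f (yR + yRm) - e2 * ((xR + xRm) - (yR + yRm))| <= k * `|(xR + xRm) - (yR + yRm)| ->
  `|f (xR + xRp) - f (yR + yRp) - e2 * ((xR + xRp) - (yR + yRp))| <= k * `|(xR + xRp) - (yR + yRp)| ->
  `|(xi - yi) - (e1 + 2 * e2)^-1 *
     ((f xi + f (xi + xm) + f (xi + xp) + (2 * f (2 * xR) - f (xR + xRm) - f (xR + xRp)))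
    - (f yi + f (yi + ym) + f (yi + yp) + (2 * f (2 * yR) - f (yR + yRm) - f (yR + yRp))))|
  <= (e1 + 2 * e2)^-1 * (- 6 * e2 + 13 * k) * D.
Proof.
move=> e20 k0 d0 hi hm hp hR hRm hRp s1 s2 s3 s4 s5 s6.
have D0 : 0 <= D by apply: le_trans hi.
have t1 := @sl_use f _ _ _ _ _ k0 hi s1.
have t2 := @sl_use f _ _ _ _ _ k0 (@pair_le _ _ _ _ _ hi hm) s2.
have t3 := @sl_use f _ _ _ _ _ k0 (@pair_le _ _ _ _ _ hi hp) s3.
have t4 := @sl_use f _ _ _ _ _ k0 (@dbl_le _ _ _ hR) s4.
have t5 := @sl_use f _ _ _ _ _ k0 (@pair_le _ _ _ _ _ hR hRm) s5.
have t6 := @sl_use f _ _ _ _ _ k0 (@pair_le _ _ _ _ _ hR hRp) s6.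
have p1 := @neg_prod _ _ _ e20 hm.
have p2 := @neg_prod _ _ _ e20 hp.
have p3 := @neg_prod _ _ _ e20 hR.
have p4 := @neg_prod _ _ _ e20 hRm.
have p5 := @neg_prod _ _ _ e20 hRp.
have E S : xi - yi - (e1 + 2 * e2)^-1 * S = - ((e1 + 2 * e2)^-1 * (S - (e1 + 2 * e2) * (xi - yi))).
  by field; apply: lt0r_neq0.
rewrite E.
rewrite normrN normrM (ger0_norm (ltW (_ : 0 < _^-1))); last by rewrite invr_gt0.
rewrite -mulrA ler_wpM2l //; first by rewrite ltW // invr_gt0.
rewrite ler_norml; apply/andP; split.
  move: t1 t2 t3 t4 t5 t6 p1 p2 p3 p4 p5 => /andP[? ?] /andP[? ?] /andP[? ?] /andP[? ?] /andP[? ?] /andP[? ?] /andP[? ?] /andP[? ?] /andP[? ?] /andP[? ?] /andP[? ?].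
  lra.
move: t1 t2 t3 t4 t5 t6 p1 p2 p3 p4 p5 => /andP[? ?] /andP[? ?] /andP[? ?] /andP[? ?] /andP[? ?] /andP[? ?] /andP[? ?] /andP[? ?] /andP[? ?] /andP[? ?] /andP[? ?].
lra.
Qed.

Lemma cont_est (f : R -> R) (e1 e2 k D xi yi : R) :
  0 <= k -> 0 < e1 + 4 * e2 ->
  `|xi - yi| <= D ->
  `|f xi - f yi - e1 * (xi - yi)| <= k * `|xi - yi| ->
  `|f (2 * xi) - f (2 * yi) - e2 * (2 * xi - 2 * yi)| <= k * `|2 * xi - 2 * yi| ->
  `|(xi - yi) - (e1 + 4 * e2)^-1 * ((f xi + 2 * f (2 * xi)) - (f yi + 2 * f (2 * yi)))|
  <= (e1 + 4 * e2)^-1 * (5 * k) * D.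
Proof.
move=> k0 d0 hi s1 s4.
have D0 : 0 <= D by apply: le_trans hi.
have t1 := @sl_use f _ _ _ _ _ k0 hi s1.
have t4 := @sl_use f _ _ _ _ _ k0 (@dbl_le _ _ _ hi) s4.
have E S : xi - yi - (e1 + 4 * e2)^-1 * S = - ((e1 + 4 * e2)^-1 * (S - (e1 + 4 * e2) * (xi - yi))).
  by field; apply: lt0r_neq0.
rewrite E.
rewrite normrN normrM (ger0_norm (ltW (_ : 0 < _^-1))); last by rewrite invr_gt0.
rewrite -mulrA ler_wpM2l //; first by rewrite ltW // invr_gt0.
rewrite ler_norml; apply/andP; split.
  move: t1 t4 => /andP[? ?] /andP[? ?]; lra.
move: t1 t4 => /andP[? ?] /andP[? ?]; lra.
Qed.
End Rows.

Lemma main_aux (R : realType) (eta : R -> R) (a0 e1 e2 : R) (N K : nat) :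
  (forall t, 0 < t -> derivable eta t 1) ->
  (forall t, 0 < t -> {for t, continuous (derive1 eta)}) ->
  derive1 eta a0 = e1 -> derive1 eta (2 * a0) = e2 ->
  0 < a0 -> 0 < e1 -> e2 < 0 -> 0 < e1 + 8 * e2 ->
  exists U : set 'rV[R]_(N.*2.+1),
    [/\ open U, U (const_mx a0),
        U `<=` [set r : 'rV[R]_(N.*2.+1) | forall i, 0 < r 0 i],
        (forall x y, U x -> U y -> psiF eta K x = psiF eta K y -> x = y)
      & open (psiF eta K @` U)].
Proof.
move=> der cont He1 He2 a00 e1p e2n hg.
pose k := (e1 + 8 * e2) / 26.
have k0 : 0 < k by rewrite /k; lra.
have a02 : 0 < 2 * a0 by lra.
have [rA [rA0 rAa SA]] := @slope R eta a0 a00 der (cont _ a00) k k0.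
have [rB [rB0 rBa SB]] := @slope R eta (2 * a0) a02 der (cont _ a02) k k0.
rewrite He1 in SA; rewrite He2 in SB.
pose d := Num.min rA (rB / 2).
have d0 : 0 < d by rewrite lt_min rA0; apply: divr_gt0.
have dA : d <= rA by rewrite ge_min lexx.
have dB : d <= rB / 2 by rewrite ge_min lexx orbT.
have d2 : 0 < e1 + 2 * e2 by lra.
have d4 : 0 < e1 + 4 * e2 by lra.
pose q := (e1 + 2 * e2)^-1 * (- 6 * e2 + 13 * k).
have q0 : 0 <= q by rewrite /q mulr_ge0 // ?invr_ge0; lra.
have q1 : q < 1 by rewrite /q mulrC ltr_pdivrMr // mul1r /k; lra.
have qh : 1 / 2 <= q by rewrite /q [X in _ <= X]mulrC ler_pdivlMr // /k; lra.
have cq : (e1 + 4 * e2)^-1 * (5 * k) <= q.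
  apply: le_trans qh; rewrite mulrC ler_pdivrMr // /k; lra.
pose c := fun i : 'I_(N.*2.+1) =>
  if ((N - K < i) && (i < N + K))%N then (e1 + 2 * e2)^-1 else (e1 + 4 * e2)^-1.
have cle : (e1 + 2 * e2)^-1 <= (e1 + 4 * e2)^-1 by rewrite lef_pV2 ?posrE //; lra.
have cm0 : 0 < (e1 + 2 * e2)^-1 by rewrite invr_gt0.
have cM0 : 0 < (e1 + 4 * e2)^-1 by rewrite invr_gt0.
have cmi i : (e1 + 2 * e2)^-1 <= c i by rewrite /c; case: ifP.
have cMi i : c i <= (e1 + 4 * e2)^-1 by rewrite /c; case: ifP.
have SA' (u v : R) : `|u - a0| <= d -> `|v - a0| <= d ->
    `|eta u - eta v - e1 * (u - v)| <= k * `|u - v|.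
  by move=> hu hv; apply: SA; apply: le_trans dA.
have SB' (u u' v v' : R) : `|u - a0| <= d -> `|u' - a0| <= d -> `|v - a0| <= d -> `|v' - a0| <= d ->
    `|eta (u + u') - eta (v + v') - e2 * ((u + u') - (v + v'))| <= k * `|(u + u') - (v + v')|.
  move=> hu hu' hv hv'; apply: SB.
    have -> : u + u' - 2 * a0 = (u - a0) + (u' - a0) by ring.
    apply: le_trans (ler_normD _ _) _; lra.
  have -> : v + v' - 2 * a0 = (v - a0) + (v' - a0) by ring.
  apply: le_trans (ler_normD _ _) _; lra.
have SBd (u v : R) : `|u - a0| <= d -> `|v - a0| <= d ->
    `|eta (2 * u) - eta (2 * v) - e2 * (2 * u - 2 * v)| <= k * `|2 * u - 2 * v|.
  have E (w : R) : 2 * w = w + w by ring.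
  by move=> hu hv; rewrite (E u) (E v); apply: SB'.
have MAIN : forall x y : 'rV[R]_(N.*2.+1), `|x - const_mx a0| <= d -> `|y - const_mx a0| <= d ->
    forall i, `|(x 0 i - y 0 i) - c i * (psiF eta K x 0 i - psiF eta K y 0 i)| <= q * `|x - y|.
  move=> x y xa ya i.
  have hx j : `|x 0 j - a0| <= d.
    by have := rv_norm_ge (x - const_mx a0) j; rewrite !mxE => h; apply: le_trans h xa.
  have hy j : `|y 0 j - a0| <= d.
    by have := rv_norm_ge (y - const_mx a0) j; rewrite !mxE => h; apply: le_trans h ya.
  have hxy j : `|x 0 j - y 0 j| <= `|x - y|.
    by have := rv_norm_ge (x - y) j; rewrite !mxE.
  rewrite /psiF !mxE /c; case: ifP => hi; rewrite inord_val.
    apply: le_trans; first (apply: atom_est).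
    all: try (first [ exact: hxy | apply: SA' | apply: SB' | apply: SBd | exact: (ltW e2n) | exact: (ltW k0) | exact: d2 ]).
    all: try (first [exact: hx | exact: hy]).
    by rewrite /q.
  apply: le_trans; first (apply: cont_est).
  all: try (first [ exact: hxy | apply: SA' | apply: SB' | apply: SBd | exact: (ltW e2n) | exact: (ltW k0) | exact: d4 ]).
  all: try (first [exact: hx | exact: hy]).
  by apply: ler_wpM2r.
have [U [Uo Ua Ud Ui Uim]] := @sdd_inv R N.*2.+1 (psiF eta K) (const_mx a0) d q
   (e1 + 2 * e2)^-1 (e1 + 4 * e2)^-1 c d0 q0 q1 cm0 cM0 cmi cMi MAIN.
exists U; split => //.
move=> x /Ud /= xa i.
have := rv_norm_ge (x - const_mx a0) i; rewrite !mxE => h.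
have := le_lt_trans h xa; rewrite ltr_norml => /andP[h1 h2].
lra.
Qed.

Theorem lemma4p1 (R : realType) (phi : R -> R) (a0 r1 r2 a1 : R) (N K : nat) :
  C3_pos phi ->
  0 < a0 -> a0 < r1 -> r1 < r2 -> r2 < 2 * a0 -> a0 < a1 ->
  (forall r, 0 < r < r1 -> 0 < derive1 (derive1 phi) r) ->
  (forall r, r1 < r -> derive1 (derive1 phi) r < 0) ->
  (forall r, 0 < r < r2 -> derive1 (derive1 (derive1 phi)) r < 0) ->
  (forall r, r2 < r -> 0 < derive1 (derive1 (derive1 phi)) r) ->
  (forall r, 0 < r < a0 -> hat_eta (derive1 phi) r < 0) ->
  (forall r, a0 < r -> 0 < hat_eta (derive1 phi) r) ->
  (forall r, 0 < r < a1 -> 0 < derive1 (hat_eta (derive1 phi)) r) ->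
  (forall r, a1 < r -> derive1 (hat_eta (derive1 phi)) r < 0) ->
  (0 < N)%N -> (0 < K)%N -> (K < N.-1)%N ->
  0 < derive1 (derive1 phi) a0 + 8 * derive1 (derive1 phi) (2 * a0) ->
  exists U : set 'rV[R]_(N.*2.+1),
    [/\ open U, U (const_mx a0),
        U `<=` [set r : 'rV[R]_(N.*2.+1) | forall i, 0 < r 0 i],
        (forall x y, U x -> U y -> psiF (derive1 phi) K x = psiF (derive1 phi) K y -> x = y)
      & open (psiF (derive1 phi) K @` U)].
Proof.
move=> C3 a00 a0r1 r1r2 r2a0 _ h1 h2 _ _ _ _ _ _ _ _ _ hg.
have der : forall t, 0 < t -> derivable (derive1 phi) t 1 by move=> t /C3 [].
have cont : forall t, 0 < t -> {for t, continuous (derive1 (derive1 phi))}.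
  move=> t /C3 [_ _ d3 _]; apply: differentiable_continuous.
  by rewrite -derivable1_diffP.
have e1p : 0 < derive1 (derive1 phi) a0 by apply: h1; rewrite a00 a0r1.
have e2n : derive1 (derive1 phi) (2 * a0) < 0 by apply: h2; lra.
exact: (@main_aux R (derive1 phi) a0 (derive1 (derive1 phi) a0)
  (derive1 (derive1 phi) (2 * a0)) N K der cont erefl erefl a00 e1p e2n hg).
Qed.
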